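(* Let $\phi:M_D(\mathbb{C})\to M_D(\mathbb{C})$ be a primitive unital Schwarz map. Then $\mathcal{M}^\infty_\phi=\bigcap_{n\in\mathbb{N}}\mathcal{M}_{\phi^n}=\mathbb{C}I$.
   Context: $M_D(\mathbb{C})$ is the algebra of complex $D\times D$ matrices. A linear map $\phi$ is a unital Schwarz map if $\phi(I)=I$ and $\phi(a^*a)\ge\phi(a)^*\phi(a)$ for all $a$; it is primitive if some power $\phi^n$ maps every nonzero positive semidefinite matrix to a positive definite matrix. For a unital Schwarz map $\psi$, the multiplicative domain is $\mathcal{M}_\psi=\{a : \psi(a^*a)=\psi(a)^*\psi(a) \text{ and } \psi(aa^* )=\psi(a)\psi(a)^*\}$. For primitive unital Schwarz $\phi$ these form a decreasing sequence $\mathcal{M}_{\phi^{n+1}}\subseteq\mathcal{M}_{\phi^n}$; $\kappa(\phi)$ is the minimal $k$ with $\bigcap_n\mathcal{M}_{\phi^n}=\mathcal{M}_{\phi^k}$, and $\mathcal{M}^\infty_\phi:=\mathcal{M}_{\phi^{\kappa(\phi)}}$. *)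

(* Defs.v *)
From HB Require Import structures.
From mathcomp Require Import all_boot all_order all_algebra.
From mathcomp Require Import reals.
From mathcomp.real_closed Require Import complex.
Set Implicit Arguments. Unset Strict Implicit. Unset Printing Implicit Defensive.
Import Order.TTheory GRing.Theory Num.Theory.
Local Open Scope ring_scope.

Definition adjmx (C : numClosedFieldType) (m n : nat) (A : 'M[C]_(m, n)) : 'M[C]_(n, m) :=
  map_mx Num.conj A^T.

Definition psd (C : numClosedFieldType) (D : nat) (A : 'M[C]_D) : Prop :=
  adjmx A = A /\ forall v : 'cV[C]_D, 0 <= (adjmx v *m A *m v) ord0 ord0.

Definition posdef (C : numClosedFieldType) (D : nat) (A : 'M[C]_D) : Prop :=
  adjmx A = A /\ forall v : 'cV[C]_D, v != 0 -> 0 < (adjmx v *m A *m v) ord0 ord0.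

Definition unital_schwarz (C : numClosedFieldType) (D : nat)
  (phi : {linear 'M[C]_D -> 'M[C]_D}) : Prop :=
  phi 1%:M = 1%:M /\
  forall a : 'M[C]_D, psd (phi (adjmx a *m a) - adjmx (phi a) *m phi a).

Definition primitive (C : numClosedFieldType) (D : nat)
  (phi : {linear 'M[C]_D -> 'M[C]_D}) : Prop :=
  exists n : nat, forall x : 'M[C]_D, psd x -> x != 0 -> posdef (iter n phi x).

Definition mult_dom (C : numClosedFieldType) (D : nat)
  (psi : 'M[C]_D -> 'M[C]_D) (a : 'M[C]_D) : Prop :=
  psi (adjmx a *m a) = adjmx (psi a) *m psi a /\
  psi (a *m adjmx a) = psi a *m adjmx (psi a).

(* Main.v *)
Require Import Defs.
From HB Require Import structures.
From mathcomp Require Import all_boot all_order all_algebra.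
From mathcomp Require Import reals.
From mathcomp.real_closed Require Import complex.
Import Order.TTheory GRing.Theory Num.Theory.
Local Open Scope ring_scope.

Section Adj.
Context {C : numClosedFieldType}.

Lemma adjmxK m n (A : 'M[C]_(m, n)) : adjmx (adjmx A) = A.
Proof. by apply/matrixP => i j; rewrite !mxE conjCK. Qed.

Lemma adjmxD m n (A B : 'M[C]_(m, n)) : adjmx (A + B) = adjmx A + adjmx B.
Proof. by apply/matrixP => i j; rewrite !mxE rmorphD. Qed.

Lemma adjmxN m n (A : 'M[C]_(m, n)) : adjmx (- A) = - adjmx A.
Proof. by apply/matrixP => i j; rewrite !mxE rmorphN. Qed.

Lemma adjmxB m n (A B : 'M[C]_(m, n)) : adjmx (A - B) = adjmx A - adjmx B.
Proof. by rewrite adjmxD adjmxN. Qed.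

Lemma adjmxZ m n c (A : 'M[C]_(m, n)) : adjmx (c *: A) = c^* *: adjmx A.
Proof. by apply/matrixP => i j; rewrite !mxE rmorphM. Qed.

Lemma adjmxM m n p (A : 'M[C]_(m, n)) (B : 'M[C]_(n, p)) :
  adjmx (A *m B) = adjmx B *m adjmx A.
Proof.
apply/matrixP => i j; rewrite !mxE rmorph_sum; apply: eq_bigr => k _.
by rewrite !mxE rmorphM mulrC.
Qed.

Lemma adjmx_scalar n c : adjmx (c%:M : 'M[C]_n) = (c^*)%:M.
Proof. by apply/matrixP => i j; rewrite !mxE rmorphMn eq_sym. Qed.

Lemma adj_quad_ge0 m n (x : 'M[C]_(m, n)) (i : 'I_n) : 0 <= (adjmx x *m x) i i.
Proof.
rewrite !mxE; apply: sumr_ge0 => k _; rewrite !mxE mulrC; exact: mul_conjC_ge0.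
Qed.

Lemma psd_adj n (x : 'M[C]_n) : psd (adjmx x *m x).
Proof.
split; first by rewrite adjmxM adjmxK.
move=> v; rewrite -!mulmxA mulmxA -adjmxM; exact: adj_quad_ge0.
Qed.

Lemma adj_eq0 n (x : 'M[C]_n) : adjmx x *m x = 0 -> x = 0.
Proof.
move=> H; apply/matrixP => k i; rewrite mxE.
have := congr1 (fun M : 'M[C]_n => M i i) H; rewrite !mxE => /eqP.
rewrite psumr_eq0; last by move=> j _; rewrite !mxE mulrC mul_conjC_ge0.
move=> /allP /(_ k (mem_index_enum _)) /implyP /(_ isT).
by rewrite !mxE mulrC mul_conjC_eq0 => /eqP.
Qed.

Lemma shift_id n (a : 'M[C]_n) c :
  adjmx (a - c%:M) *m (a - c%:M) =
  adjmx a *m a - c *: adjmx a - c^* *: a + (c^* * c) *: 1%:M.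
Proof.
rewrite adjmxB adjmx_scalar mulmxBl !mulmxBr mul_mx_scalar !mul_scalar_mx.
rewrite scalemx1 scale_scalar_mx opprB addrA.
by rewrite addrAC.
Qed.

Lemma eigen_col n (A : 'M[C]_n.+1) : exists c, exists2 w : 'cV[C]_n.+1, w != 0 & A *m w = c *: w.
Proof.
have : size (char_poly A^T) != 1 by rewrite size_char_poly.
case/closed_rootP => c; rewrite -eigenvalue_root_char => /eigenvalueP [v Hv Hv0].
exists c, v^T; first by rewrite trmx_eq0.
by rewrite -[A]trmxK -trmx_mul Hv linearZ.
Qed.

End Adj.
Section Gen.
Variables (C : numClosedFieldType) (D : nat) (f : 'M[C]_D -> 'M[C]_D).
Hypothesis flin : forall c u v, f (c *: u + v) = c *: f u + f v.

Lemma f0 : f 0 = 0.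
Proof. by have := flin (-1) 0 0; rewrite !scaleN1r !addNr. Qed.
Lemma fD u v : f (u + v) = f u + f v.
Proof. by have := flin 1 u v; rewrite !scale1r. Qed.
Lemma fZ c u : f (c *: u) = c *: f u.
Proof. by have := flin c u 0; rewrite !addr0 f0 addr0. Qed.
Lemma fN u : f (- u) = - f u.
Proof. by rewrite -scaleN1r fZ scaleN1r. Qed.
Lemma fB u v : f (u - v) = f u - f v.
Proof. by rewrite fD fN. Qed.

Hypothesis f1 : f 1%:M = 1%:M.
Hypothesis fstar : forall a, f (adjmx a) = adjmx (f a).
Hypothesis fprim : forall x, psd x -> x != 0 -> posdef (f x).

Lemma key a : mult_dom f a -> exists c, a = c%:M.
Proof.
case=> Ha _.
case: D f flin f1 fstar fprim a Ha => [|n] g glin g1 gstar gprim a Ha.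
  by exists 0; apply/matrixP => [[]].
have [c [w w0 Hw]] := @eigen_col _ _ (g a).
exists c; apply/eqP; rewrite -subr_eq0; apply/negPn/negP => x0.
have : adjmx (a - c%:M) *m (a - c%:M) != 0.
  by apply: contra x0 => /eqP /adj_eq0 ->.
move=> /(gprim _ (psd_adj _ _)) [_ /(_ w w0)].
have gB u v : g (u - v) = g u - g v.
  by have := glin (-1) v u; rewrite !scaleN1r addrC [- g v + _]addrC.
have gZ c' u : g (c' *: u) = c' *: g u.
  have g0 : g 0 = 0.
    by have := glin (-1) 0 0; rewrite !scaleN1r !addNr.
  by have := glin c' u 0; rewrite !addr0 g0 addr0.
have gD u v : g (u + v) = g u + g v by have := glin 1 u v; rewrite !scale1r.
rewrite shift_id gD !gB !gZ g1 Ha gstar -shift_id.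
rewrite -!mulmxA.
have -> : (g a - c%:M) *m w = 0 by rewrite mulmxBl Hw mul_scalar_mx subrr.
by rewrite !mulmx0 !mxE ltxx.
Qed.
End Gen.

Lemma expand_adj {C : numClosedFieldType} n (x : 'M[C]_n) c :
  adjmx (x + c%:M) *m (x + c%:M) =
  adjmx x *m x + (c *: adjmx x + c^* *: x) + adjmx (c%:M) *m c%:M.
Proof.
rewrite adjmxD mulmxDl !mulmxDr mul_mx_scalar.
have -> : adjmx (c%:M) *m x = c^* *: x by rewrite adjmx_scalar mul_scalar_mx.
by rewrite !addrA.
Qed.

Section Phi.
Context {C : numClosedFieldType} {D : nat} (phi : {linear 'M[C]_D -> 'M[C]_D}).

Lemma star_phi : unital_schwarz phi -> forall a, phi (adjmx a) = adjmx (phi a).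
Proof.
case=> _ Hs a.
have H1 (x : 'M[C]_D) : adjmx (phi (adjmx x *m x)) = phi (adjmx x *m x).
  by have [+ _] := Hs x; rewrite adjmxB adjmxM adjmxK => /addIr.
set u := phi a; set v := phi (adjmx a).
have Hc c : c^* *: (adjmx v - u) + c *: (adjmx u - v) = 0.
  have := H1 (a + c%:M); rewrite expand_adj !linearD !linearZ /= -/u -/v.
  rewrite !adjmxD !adjmxZ H1 H1 conjCK => /addIr /addrI E.
  by rewrite !scalerN addrACA -opprD E [c^* *: u + _]addrC subrr.
have E1 := Hc 1; rewrite conjC1 !scale1r in E1.
have Ei := Hc 'i; rewrite conjCi scaleNr addrC -scalerN -scalerDr in Ei.
move/eqP: Ei; rewrite scaler_eq0 (negbTE (neq0Ci C)) /= subr_eq0 => /eqP Ei.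
move: E1; rewrite Ei -mulr2n -scaler_nat.
move/eqP; rewrite scaler_eq0 pnatr_eq0 /= subr_eq0 => /eqP E.
by rewrite -E adjmxK.
Qed.

Lemma iter_lin n c u v : iter n phi (c *: u + v) = c *: iter n phi u + iter n phi v.
Proof. by elim: n => //= n IH; rewrite IH linearP. Qed.

Lemma iter_scalar n c : phi 1%:M = 1%:M -> iter n phi (c%:M) = c%:M.
Proof.
move=> H1; elim: n => //= n ->.
by rewrite -scalemx1 linearZ /= H1.
Qed.

Lemma iter_star n : unital_schwarz phi -> forall a, iter n phi (adjmx a) = adjmx (iter n phi a).
Proof. by move=> Hs a; elim: n => //= n ->; rewrite star_phi. Qed.

Lemma scal_dom n c : phi 1%:M = 1%:M -> mult_dom (iter n phi) c%:M.
Proof.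
move=> H1; by rewrite /mult_dom adjmx_scalar -!scalar_mxM !iter_scalar // adjmx_scalar -!scalar_mxM.
Qed.

End Phi.

Theorem lemma3p3 (R : realType) (D : nat)
  (phi : {linear 'M[R[i]]_D -> 'M[R[i]]_D}) :
  unital_schwarz phi -> primitive phi ->
  (forall a : 'M[R[i]]_D,
     (forall n : nat, mult_dom (iter n phi) a) <-> exists c : R[i], a = c%:M) /\
  (exists k : nat,
     (forall a : 'M[R[i]]_D,
        mult_dom (iter k phi) a <-> (forall n : nat, mult_dom (iter n phi) a)) /\
     (forall a : 'M[R[i]]_D, mult_dom (iter k phi) a <-> exists c : R[i], a = c%:M)).
Proof.
move=> Hs [N HN].
have H1 : phi 1%:M = 1%:M by case: Hs.
have K a : mult_dom (iter N phi) a -> exists c : R[i], a = c%:M.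
  apply: key => //.
  - exact: iter_lin.
  - exact: iter_scalar.
  - exact: iter_star.
have S a : (exists c : R[i], a = c%:M) -> forall n, mult_dom (iter n phi) a.
  by case=> c -> n; apply: scal_dom.
split.
  by move=> a; split; [move=> /(_ N) /K | exact: S].
exists N; split => a; split.
- by move/K/S.
- by move/(_ N).
- exact: K.
- by move/S/(_ N).
Qed.
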